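(* Let $n\ge 10$ be an integer and let $\mathcal{F}_n=\{\,|E(F_n(a,b))| : a,b \text{ integers},\ a\ge 0,\ b\ge 2,\ a+b+5\le n\,\}$. Then $$\left[3n-11, \left\lfloor \frac{n-1}{2} \right\rfloor \left\lceil \frac{n-1}{2} \right\rceil +2\right]\subseteq \mathcal{F}_n.$$
   Context: All graphs are finite and simple. For integers $p\le q$, $[p,q]$ denotes $\{p,p+1,\dots,q\}$. For nonnegative integers $n,a,b$ with $n\ge a+b+5$, the graph $F_n(a,b)$ is defined as follows. Its vertex set is the disjoint union $I\cup A_1\cup A_2\cup B_1\cup B_2\cup C$, where $I=\{x\}$, $A_1=\{u_1,u_2\}$, $B_1=\{v_1,v_2\}$, $|A_2|=a$, $|B_2|=b$, $|C|=n-a-b-5$. Its edges are: all pairs between $A_1\cup A_2\cup C$ and $B_2$; all pairs between $A_2$ and $B_1$; all pairs between $x$ and $A_1\cup B_1\cup C$; and the two edges $u_1v_1$ and $u_2v_2$. There are no other edges. (Its number of edges is $b(n-b-3)+n+a-b+1$.) *)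

(* Defs.v *)
From mathcomp Require Import all_boot.
Set Implicit Arguments. Unset Strict Implicit. Unset Printing Implicit Defensive.

(* The graph F_n(a,b) on vertex set 'I_n (= {0,...,n-1}), with the parts:
     I  = {0}            (x)
     A1 = {1,2}          (u1 = 1, u2 = 2)
     B1 = {3,4}          (v1 = 3, v2 = 4)
     A2 = [5, 5+a-1]
     B2 = [5+a, 5+a+b-1]
     C  = [5+a+b, n-1]   (size n-a-b-5). *)
Definition inX (i : nat) : bool := i == 0.
Definition inA1 (i : nat) : bool := (i == 1) || (i == 2).
Definition inB1 (i : nat) : bool := (i == 3) || (i == 4).
Definition inA2 (a i : nat) : bool := (5 <= i) && (i < 5 + a).
Definition inB2 (a b i : nat) : bool := (5 + a <= i) && (i < 5 + a + b).
Definition inC (a b i : nat) : bool := 5 + a + b <= i.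

Definition Fbase (a b i j : nat) : bool :=
  [|| (inA1 i || inA2 a i || inC a b i) && inB2 a b j,
      inA2 a i && inB1 j,
      inX i && (inA1 j || inB1 j || inC a b j),
      (i == 1) && (j == 3)
    | (i == 2) && (j == 4)].

Definition Fadj (a b i j : nat) : bool :=
  (i != j) && (Fbase a b i j || Fbase a b j i).

Definition Fn_edges (n a b : nat) : nat :=
  #|[set e : 'I_n * 'I_n | (e.1 < e.2) && Fadj a b e.1 e.2]|.

(* Main.v *)
Require Import Defs.
From mathcomp Require Import all_boot.
From mathcomp Require Import zify.
Set Warnings "-notation-overridden".

Lemma sum_int lo hi N : \sum_(i < N) (((lo <= i) && (i < hi)) : nat) = minn hi N - lo.
Proof.
elim: N => [|N IH]; first by rewrite big_ord0; lia.
rewrite big_ord_recr /= IH.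
case: (leqP lo N) => h1; case: (ltnP N hi) => h2 /=; lia.
Qed.

Lemma sum_lt hi N : \sum_(i < N) ((i < hi) : nat) = minn hi N.
Proof. by have := sum_int 0 hi N; rewrite subn0. Qed.

Definition d a b j := \sum_(i < j) (Fadj a b i j : nat).

Ltac simpF i j :=
  rewrite /Fadj /Fbase /inX /inA1 /inB1 /inA2 /inB2 /inC;
  try (have -> : (j == 0) = false by lia);
  try (have -> : (j == 1) = false by lia);
  try (have -> : (j == 2) = false by lia);
  try (have -> : (j == 3) = false by lia);
  try (have -> : (j == 4) = false by lia);
  try (have -> : (j != i) = true by lia);
  try (have -> : (i != j) = true by lia);
  rewrite /= ?andbF ?andbT ?orbF ?orFb ?andFb ?andTb ?orbT ?orTb /=.

Ltac finish h1 h2 h3 := rewrite ?h1 ?h2 ?h3 /= ?andbF ?andbT ?orbF ?orFb ?andFb ?andTb ?orbT ?orTb /=; lia.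

Lemma d_C a b j : 5 + a + b <= j -> d a b j = 1 + b.
Proof.
move=> hj; rewrite /d.
rewrite (eq_bigr (fun i : 'I_j => ((i < 1) : nat) + ((5 + a <= i) && (i < 5 + a + b)))).
  by rewrite big_split /= sum_int sum_lt; lia.
move=> [i ij] _ /=.
have h1 : (5 <= j) && (j < 5 + a) = false by lia.
have h2 : (5 + a <= j) && (j < 5 + a + b) = false by lia.
have h3 : (5 + a + b <= j) = true by lia.
simpF i j; finish h1 h2 h3.
Qed.

Lemma d_B2 a b j : 5 + a <= j < 5 + a + b -> d a b j = 2 + a.
Proof.
move=> hj; rewrite /d.
rewrite (eq_bigr (fun i : 'I_j => ((1 <= i) && (i < 3) : nat) + ((5 <= i) && (i < 5 + a)))).
  by rewrite big_split /= !sum_int; lia.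
move=> [i ij] _ /=.
have h1 : (5 <= j) && (j < 5 + a) = false by lia.
have h2 : (5 + a <= j) && (j < 5 + a + b) = true by lia.
have h3 : (5 + a + b <= j) = false by lia.
simpF i j; finish h1 h2 h3.
Qed.

Lemma d_A2 a b j : 5 <= j < 5 + a -> d a b j = 2.
Proof.
move=> hj; rewrite /d.
rewrite (eq_bigr (fun i : 'I_j => ((3 <= i) && (i < 5) : nat))).
  by rewrite !sum_int; lia.
move=> [i ij] _ /=.
have h1 : (5 <= j) && (j < 5 + a) = true by lia.
have h2 : (5 + a <= j) && (j < 5 + a + b) = false by lia.
have h3 : (5 + a + b <= j) = false by lia.
simpF i j; finish h1 h2 h3.
Qed.

Lemma d_small a b : [/\ d a b 0 = 0, d a b 1 = 1, d a b 2 = 1, d a b 3 = 2 & d a b 4 = 2].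
Proof.
rewrite /d !big_ord_recr !big_ord0 /= /Fadj /Fbase /inX /inA1 /inB1 /inA2 /inB2 /inC /=.
split; lia.
Qed.

Definition S a b N := \sum_(j < N) d a b j.

Lemma S_A a b k : k <= a -> S a b (5 + k) = 6 + 2 * k.
Proof.
elim: k => [|k IH] hk.
  case: (d_small a b) => h0 h1 h2 h3 h4.
  by rewrite /S !big_ord_recr big_ord0 /= h0 h1 h2 h3 h4.
rewrite /S addnS big_ord_recr /= -/(S a b (5 + k)) IH; last lia.
rewrite d_A2; lia.
Qed.

Lemma S_B a b k : k <= b -> S a b (5 + a + k) = 6 + 2 * a + k * (a + 2).
Proof.
elim: k => [|k IH] hk.
  by rewrite addn0 S_A //; lia.
rewrite /S addnS big_ord_recr /= -/(S a b (5 + a + k)) IH; last lia.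
rewrite d_B2; lia.
Qed.

Lemma S_C a b k : S a b (5 + a + b + k) = 6 + 2 * a + b * (a + 2) + k * (b + 1).
Proof.
elim: k => [|k IH].
  by rewrite addn0 S_B //; lia.
rewrite /S addnS big_ord_recr /= -/(S a b (5 + a + b + k)) IH.
rewrite d_C; lia.
Qed.

Lemma edges_S n a b : Fn_edges n a b = S a b n.
Proof.
rewrite /Fn_edges cardsE -sum1_card big_mkcond /=.
rewrite -(pair_big (fun _ => true) (fun _ => true) (fun i j : 'I_n => if (i < j) && Fadj a b i j then 1 else 0)) /=.
rewrite exchange_big /S. change (\sum_(j < n) \sum_(i < n) (if (i < j) && Fadj a b i j then 1 else 0) = \sum_(j < n) d a b j). apply: eq_bigr => j _.
rewrite /d (big_ord_widen n (fun i => (Fadj a b i j : nat)) (ltnW (ltn_ord j))).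
rewrite [RHS]big_mkcond /=; apply: eq_bigr => i _.
by case: (i < j); case: Fadj.
Qed.
Lemma cover n k : 10 <= n -> 2 * (k + 4) <= n - 1 -> forall m,
  3 * n - 11 <= m <= (k + 4) * (n - k - 5) + 2 ->
  exists a b r, [/\ 2 <= b, n = a + b + 5 + r & m = 6 + 2 * a + b * (a + 2) + r * (b + 1)].
Proof.
move=> hn; elim: k => [|k IH] hk m /andP [m1 m2].
  exists (m - (3 * n - 11)), 2, (n - 7 - (m - (3 * n - 11))); split; lia.
have [hm|hm] := leqP m ((k + 4) * (n - k - 5) + 2).
  by apply: IH; [lia | rewrite m1 hm].
have {hk} [c hc] : exists c, n = 2 * k + 10 + c by exists (n - (2 * k + 10)); lia.
subst n.
have e1 : 2 * k + 10 + c - k.+1 - 5 = k + 4 + c by lia.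
have e2 : 2 * k + 10 + c - k - 5 = k + 5 + c by lia.
rewrite e1 in m2; rewrite e2 in hm.
pose g := 2 * k + 12 + (k + 2 + c) * (k + 4).
have hg : g <= m by rewrite /g; nia.
have hg2 : m - g <= k + 2 + c by rewrite /g; nia.
exists (m - g), (k + 3), (k + 2 + c - (m - g)); split; [lia | lia | ].
rewrite /g in hg hg2 *.
nia.
Qed.

Theorem lemma2p3 (n : nat) : 10 <= n ->
  forall m : nat,
    3 * n - 11 <= m <= (n - 1)./2 * uphalf (n - 1) + 2 ->
    exists a b : nat, [/\ 2 <= b, a + b + 5 <= n & Fn_edges n a b = m].
Proof.
move=> hn m hm.
have ho := odd_double_half (n - 1).
rewrite uphalf_half in hm.
move: hm ho; set h := (n - 1)./2; set o := odd (n - 1) => hm ho.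
have ho1 : (o : nat) <= 1 by case: (o).
have hh : 4 <= h by lia.
have := @cover n (h - 4) hn ltac:(lia) m.
have -> : h - 4 + 4 = h by lia.
have -> : n - (h - 4) - 5 = o + h by lia.
move=> /(_ ltac:(lia)) [a [b [r [hb hnr hmv]]]].
exists a, b; split => //; first lia.
have -> : n = 5 + a + b + r by lia.
by rewrite edges_S S_C hmv; lia.
Qed.
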